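(* For $\lambda\ge1$ and $s\in\mathbb R$ let $$\widetilde L(s)=-\int_{-\infty}^{\infty}\Big[1-\cos\big(4\arctan e^{\lambda t}-4\arctan e^{t-s}\big)\Big]\,dt .$$ Let $\lambda_0>1$ be the value of $\lambda$ for which $\max_{t>0}\big(4\arctan e^{\lambda t}-4\arctan e^{t}\big)=\pi/2$ (numerically $\lambda_0\simeq3.68078$). If $1\le\lambda\le\lambda_0$, then $\widetilde L$ has a nondegenerate critical point at $s=0$.
   Context: This $\widetilde L$ is the reduced Melnikov potential for the Hamiltonian $\tfrac12(\eta_1^2+\eta_2^2)+(\cos\xi_1-1)+\lambda^2(\cos\xi_2-1)+\varepsilon(1-\cos(\xi_2-\xi_1))$ along the family of unperturbed homoclinic loops $\xi_1=4\arctan e^{t-s}$, $\xi_2=4\arctan e^{\lambda t}$. The maximum $\max_{t>0}(4\arctan e^{\lambda t}-4\arctan e^{t})$ is increasing in $\lambda$, from $0$ at $\lambda=1$ towards $\pi$ as $\lambda\to\infty$, so $\lambda_0$ is well defined. *)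

(* Defs.v *)
From Stdlib Require Import Reals.
From Coquelicot Require Import Coquelicot.
Open Scope R_scope.

Definition melnikov_integrand (lam s t : R) : R :=
  1 - cos (4 * atan (exp (lam * t)) - 4 * atan (exp (t - s))).

Definition Ltilde (lam s : R) : R :=
  - RInt_gen (melnikov_integrand lam s)
      (Rbar_locally m_infty) (Rbar_locally p_infty).

Definition phi (lam t : R) : R := 4 * atan (exp (lam * t)) - 4 * atan (exp t).

Definition is_lambda0 (l0 : R) : Prop :=
  1 < l0 /\
  (exists t0, 0 < t0 /\ phi l0 t0 = PI / 2) /\
  (forall t, 0 < t -> phi l0 t <= PI / 2).

Definition nondegenerate_critical_point (f : R -> R) (x0 : R) : Prop :=
  exists (f' : R -> R) (eps : R), 0 < eps /\
    (forall x, Rabs (x - x0) < eps -> is_derive f x (f' x)) /\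
    f' x0 = 0 /\
    exists d : R, is_derive f' x0 d /\ d <> 0.

(* Main.v *)
Require Import Defs.
From Stdlib Require Import Reals.
From Coquelicot Require Import Coquelicot.
Open Scope R_scope.
From Stdlib Require Import Lra.

Lemma C_nonneg (h : R -> R) C : (forall t, Rabs (h t) <= C * exp (- Rabs t)) -> 0 <= C.
Proof. intros H. specialize (H 0). rewrite Rabs_R0, Ropp_0, exp_0 in H.
 generalize (Rabs_pos (h 0)); lra. Qed.

Lemma RInt_exp_neg C x y : RInt (fun t => C * exp (- t)) x y = C * exp (- x) - C * exp (- y).
Proof.
 apply is_RInt_unique.
 replace (C * exp (- x) - C * exp (- y)) with (minus ((fun t => - C * exp (- t)) y) ((fun t => - C * exp (- t)) x)).
 2:{ unfold minus, plus, opp; simpl; ring. }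
 apply (is_RInt_derive (fun t => - C * exp (- t)) (fun t => C * exp (- t))).
 - intros t _. auto_derive; auto; ring.
 - intros t _. apply (ex_derive_continuous (K:=R_AbsRing) (V:=R_NormedModule)). auto_derive; auto.
Qed.

Lemma RInt_exp_pos C x y : RInt (fun t => C * exp t) x y = C * exp y - C * exp x.
Proof.
 apply is_RInt_unique.
 replace (C * exp y - C * exp x) with (minus ((fun t => C * exp t) y) ((fun t => C * exp t) x)).
 2:{ unfold minus, plus, opp; simpl; ring. }
 apply (is_RInt_derive (fun t => C * exp t) (fun t => C * exp t)).
 - intros t _. auto_derive; auto; ring.
 - intros t _. apply (ex_derive_continuous (K:=R_AbsRing) (V:=R_NormedModule)). auto_derive; auto.
Qed.

Lemma cont_abs (h : R -> R) : (forall t, continuous h t) -> forall t, continuous (fun t => Rabs (h t)) t.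
Proof. intros Hc t. apply (continuous_comp h Rabs). apply Hc. apply continuous_Rabs. Qed.

Lemma exRc (h : R -> R) a b : (forall t, continuous h t) -> ex_RInt h a b.
Proof. intros Hc. apply (ex_RInt_continuous (V:=R_CompleteNormedModule)). intros; apply Hc. Qed.

Lemma tail_pos (h : R -> R) C M x y : (forall t, continuous h t) ->
  (forall t, Rabs (h t) <= C * exp (- Rabs t)) -> 0 <= M -> M <= x -> M <= y ->
  Rabs (RInt h x y) <= C * exp (- M).
Proof.
 intros Hc Hd HM Hx Hy. pose proof (C_nonneg h C Hd) as HC.
 assert (K: forall x y, M <= x -> x <= y -> Rabs (RInt h x y) <= C * exp (- M)).
 { clear x y Hx Hy. intros x y Hx Hxy.
   eapply Rle_trans. apply abs_RInt_le. auto. apply exRc, Hc.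
   eapply Rle_trans. apply RInt_le with (g := fun t => C * exp (- t)). auto.
   apply exRc, cont_abs, Hc.
   apply exRc. intros. apply (ex_derive_continuous (K:=R_AbsRing) (V:=R_NormedModule)); auto_derive; auto.
   intros t Ht. rewrite <- (Rabs_right t) at 2 by lra. apply Hd.
   rewrite RInt_exp_neg.
   assert (exp (- x) <= exp (- M)) by (apply exp_le_inv; lra) || (destruct (Rle_lt_or_eq_dec _ _ Hx); [left; apply exp_increasing; lra| right; subst; auto]).
   generalize (exp_pos (- y)); intros. nra. }
 destruct (Rle_dec x y). apply K; auto.
 rewrite <- (opp_RInt_swap h y x) by (apply exRc, Hc). unfold opp; simpl. rewrite Rabs_Ropp. apply K; lra.
Qed.

Lemma tail_neg (h : R -> R) C M x y : (forall t, continuous h t) ->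
  (forall t, Rabs (h t) <= C * exp (- Rabs t)) -> 0 <= M -> x <= - M -> y <= - M ->
  Rabs (RInt h x y) <= C * exp (- M).
Proof.
 intros Hc Hd HM Hx Hy. pose proof (C_nonneg h C Hd) as HC.
 assert (K: forall x y, y <= - M -> x <= y -> Rabs (RInt h x y) <= C * exp (- M)).
 { clear x y Hx Hy. intros x y Hy Hxy.
   eapply Rle_trans. apply abs_RInt_le. auto. apply exRc, Hc.
   eapply Rle_trans. apply RInt_le with (g := fun t => C * exp t). auto.
   apply exRc, cont_abs, Hc.
   apply exRc. intros. apply (ex_derive_continuous (K:=R_AbsRing) (V:=R_NormedModule)); auto_derive; auto.
   intros t Ht. replace t with (- - t) at 2 by ring. rewrite <- (Rabs_left t) by lra. apply Hd.
   rewrite RInt_exp_pos.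
   assert (exp y <= exp (- M)).
   { destruct (Rle_lt_or_eq_dec _ _ Hy); [left; apply exp_increasing; lra| right; subst; auto]. }
   generalize (exp_pos x); intros. nra. }
 destruct (Rle_dec x y). apply K; auto.
 rewrite <- (opp_RInt_swap h y x) by (apply exRc, Hc). unfold opp; simpl. rewrite Rabs_Ropp. apply K; lra.
Qed.

Lemma is_RInt_gen_of_lim (h : R -> R) (Fa Fb : (R -> Prop) -> Prop) l :
  Filter Fa -> Filter Fb ->
  filter_prod Fa Fb (fun ab => ex_RInt h (fst ab) (snd ab)) ->
  filterlim (fun ab => RInt h (fst ab) (snd ab)) (filter_prod Fa Fb) (locally l) ->
  is_RInt_gen h Fa Fb l.
Proof.
 intros FFa FFb Hex Hlim P HP. specialize (Hlim P HP). unfold filtermap in Hlim.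
 unfold filtermapi. generalize (filter_and _ _ Hex Hlim). apply filter_imp.
 intros [a b] [H1 H2]. exists (RInt h a b). split; auto. apply (RInt_correct (V:=R_CompleteNormedModule)); auto.
Qed.

Lemma choose_M C eps : 0 <= C -> 0 < eps -> exists M, 0 <= M /\ 2 * (C * exp (- M)) < eps.
Proof.
 intros HC He. set (K := eps / (2 * C + 2)).
 assert (HK : 0 < K) by (unfold K; apply Rdiv_lt_0_compat; lra).
 exists (Rmax 0 (- ln K)). split. apply Rmax_l.
 assert (exp (- Rmax 0 (- ln K)) <= K).
 { rewrite <- (exp_ln K) at 2 by auto. destruct (Rle_lt_or_eq_dec (- Rmax 0 (- ln K)) (ln K)).
   generalize (Rmax_r 0 (- ln K)); lra. left; apply exp_increasing; auto. right; rewrite e; auto. }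
 assert (2 * C * K < eps).
 { unfold K. apply Rmult_lt_reg_r with (2 * C + 2). lra.
   field_simplify; lra. }
 generalize (exp_pos (- Rmax 0 (- ln K))); intros. nra.
Qed.

Lemma ex_int (h : R -> R) C : (forall t, continuous h t) ->
  (forall t, Rabs (h t) <= C * exp (- Rabs t)) ->
  ex_RInt_gen h (Rbar_locally m_infty) (Rbar_locally p_infty).
Proof.
 intros Hc Hd. pose proof (C_nonneg h C Hd) as HC.
 set (Fp := filter_prod (Rbar_locally m_infty) (Rbar_locally p_infty)).
 set (F := filtermap (fun ab : R * R => RInt h (fst ab) (snd ab)) Fp).
 assert (PF : ProperFilter F).
 { unfold F, Fp. apply filtermap_proper_filter. typeclasses eauto. }
 assert (Hcau : cauchy F).
 { apply cauchy_distance; auto. intros eps.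
   destruct (choose_M C eps HC (cond_pos eps)) as [M [HM HMe]].
   exists (fun z => exists a b, a < - M /\ M < b /\ z = RInt h a b). split.
   - unfold F, filtermap, Fp.
     apply Filter_prod with (fun a => a < - M) (fun b => M < b).
     exists (- M). auto. exists M. auto.
     intros a b Ha Hb. exists a, b. simpl. auto.
   - intros u v [a [b [Ha [Hb ->]]]] [a' [b' [Ha' [Hb' ->]]]].
     change (Rabs (RInt h a' b' - RInt h a b) < eps).
     rewrite <- (RInt_Chasles h a' a b') by (apply exRc, Hc).
     rewrite <- (RInt_Chasles h a b b') by (apply exRc, Hc).
     unfold plus; simpl.
     replace (RInt h a' a + (RInt h a b + RInt h b b') - RInt h a b) with (RInt h a' a + RInt h b b') by ring.
     eapply Rle_lt_trans. apply Rabs_triang.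
     pose proof (tail_neg h C M a' a Hc Hd HM ltac:(lra) ltac:(lra)).
     pose proof (tail_pos h C M b b' Hc Hd HM ltac:(lra) ltac:(lra)). lra. }
 exists (lim F). apply is_RInt_gen_of_lim; try typeclasses eauto.
 - apply filter_forall. intros; apply exRc, Hc.
 - intros P [eps HP]. generalize (complete_cauchy F PF Hcau eps). apply filter_imp. auto.
Qed.

Notation Fm := (Rbar_locally m_infty).
Notation Fpi := (Rbar_locally p_infty).

Lemma prod_le : filter_prod Fm Fpi (fun ab : R * R => fst ab <= snd ab).
Proof. apply Filter_prod with (fun a => a < 0) (fun b => 0 < b). exists 0; auto. exists 0; auto.
 intros; simpl; lra. Qed.

Lemma deriv_cont (F : R -> R) y l : is_derive F y l -> continuity_pt F y.
Proof. intros H. apply derivable_continuous_pt. exists l. apply is_derive_Reals; auto. Qed.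

Lemma taylor2 (f f1 f2 : R -> R) (g x h r : R) :
  (forall s, is_derive f s (f1 s)) -> (forall s, is_derive f1 s (f2 s)) ->
  Rabs h < r -> (forall s, Rabs (s - x) < r -> Rabs (f2 s) <= g) ->
  Rabs (f (x + h) - f x - h * f1 x) <= h ^ 2 * g.
Proof.
 intros Hd1 Hd2 Hh Hg.
 destruct (MVT_gen (fun s => f s - s * f1 x) x (x + h) (fun s => f1 s - f1 x)) as [c [Hc Hce]].
 { intros s _. assert (K: is_derive (fun s => s * f1 x) s (f1 x)) by (auto_derive; auto; ring).
   apply (is_derive_minus f _ s _ _ (Hd1 s) K). }
 { intros s _. apply deriv_cont with (f1 s - f1 x).
   assert (K: is_derive (fun s => s * f1 x) s (f1 x)) by (auto_derive; auto; ring).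
   apply (is_derive_minus f _ s _ _ (Hd1 s) K). }
 destruct (MVT_gen f1 x c f2) as [c' [Hc' Hce']].
 { intros s _. apply Hd2. }
 { intros s _. apply deriv_cont with (f2 s). apply Hd2. }
 assert (E: f (x + h) - f x - h * f1 x = (f2 c' * (c - x)) * h).
 { replace (x + h - x) with h in Hce by ring. rewrite <- Hce'. rewrite <- Hce. ring. }
 rewrite E.
 assert (Hcx : Rabs (c - x) <= Rabs h).
 { unfold Rmin, Rmax in Hc. destruct (Rle_dec x (x + h)); unfold Rabs;
   repeat destruct Rcase_abs; lra. }
 assert (Hc'x : Rabs (c' - x) <= Rabs h).
 { unfold Rmin, Rmax in Hc, Hc'. destruct (Rle_dec x (x + h)); destruct (Rle_dec x c); unfold Rabs in *;
   repeat destruct Rcase_abs; lra. }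
 assert (Hf2 : Rabs (f2 c') <= g) by (apply Hg; lra).
 rewrite !Rabs_mult.
 replace (h ^ 2) with (Rabs h * Rabs h) by (rewrite <- Rabs_mult; rewrite Rabs_right; [ring| nra]).
 generalize (Rabs_pos (f2 c')) (Rabs_pos (c - x)) (Rabs_pos h). intros.
 assert (Rabs (f2 c') * Rabs (c - x) <= g * Rabs h) by (apply Rmult_le_compat; auto).
 nra.
Qed.

Lemma param_deriv (f f1 f2 : R -> R -> R) (g : R -> R) x r :
 0 < r ->
 (forall s t, is_derive (fun s => f s t) s (f1 s t)) ->
 (forall s t, is_derive (fun s => f1 s t) s (f2 s t)) ->
 (forall s t, Rabs (s - x) < r -> Rabs (f2 s t) <= g t) ->
 (forall s, Rabs (s - x) < r -> ex_RInt_gen (f s) Fm Fpi) ->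
 ex_RInt_gen (f1 x) Fm Fpi -> ex_RInt_gen g Fm Fpi ->
 is_derive (fun s => RInt_gen (f s) Fm Fpi) x (RInt_gen (f1 x) Fm Fpi).
Proof.
 intros Hr Hd1 Hd2 Hg Hf Hf1 Hgi.
 apply is_derive_Reals. intros eps Heps.
 set (G := RInt_gen g Fm Fpi).
 assert (Hd : 0 < Rmin r (eps / (Rabs G + 1))).
 { apply Rmin_pos; auto. apply Rdiv_lt_0_compat; auto. generalize (Rabs_pos G); lra. }
 exists (mkposreal _ Hd). intros h Hh0 Hhd. simpl in Hhd.
 assert (Hhr : Rabs h < r) by (generalize (Rmin_l r (eps / (Rabs G + 1))); lra).
 assert (Hhe : Rabs h < eps / (Rabs G + 1)) by (generalize (Rmin_r r (eps / (Rabs G + 1))); lra).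
 assert (Ex : Rabs (x - x) < r) by (rewrite Rminus_eq_0, Rabs_R0; auto).
 assert (Exh : Rabs (x + h - x) < r) by (replace (x + h - x) with h by ring; auto).
 pose proof (RInt_gen_correct _ (Hf x Ex)) as I0.
 pose proof (RInt_gen_correct _ (Hf (x + h) Exh)) as Ih.
 pose proof (RInt_gen_correct _ Hf1) as I1.
 pose proof (RInt_gen_correct _ Hgi) as IG.
 pose proof (is_RInt_gen_minus _ _ _ _ Ih I0) as K1.
 pose proof (is_RInt_gen_scal _ h _ I1) as K2.
 pose proof (is_RInt_gen_minus _ _ _ _ K1 K2) as K3.
 pose proof (is_RInt_gen_scal _ (h ^ 2) _ IG) as K4.
 assert (Hpt : filter_prod Fm Fpi (fun ab : R * R => forall y, fst ab <= y <= snd ab ->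
     norm (minus (minus (f (x + h) y) (f x y)) (scal h (f1 x y))) <= scal (h ^ 2) (g y))).
 { apply filter_forall. intros ab y _. change (Rabs (f (x + h) y - f x y - h * f1 x y) <= h ^ 2 * g y).
     apply (taylor2 (fun s => f s y) (fun s => f1 s y) (fun s => f2 s y) (g y) x h r); auto.
  }
 assert (N := RInt_gen_norm _ _ _ _ prod_le Hpt K3 K4).
 change (Rabs (RInt_gen (f (x + h)) Fm Fpi - RInt_gen (f x) Fm Fpi - h * RInt_gen (f1 x) Fm Fpi)
   <= h ^ 2 * G) in N.
 replace ((RInt_gen (f (x + h)) Fm Fpi - RInt_gen (f x) Fm Fpi) / h - RInt_gen (f1 x) Fm Fpi)
   with ((RInt_gen (f (x + h)) Fm Fpi - RInt_gen (f x) Fm Fpi - h * RInt_gen (f1 x) Fm Fpi) / h)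
   by (field; auto).
 unfold Rdiv. rewrite Rabs_mult, Rabs_inv.
 assert (Hah : 0 < Rabs h) by (apply Rabs_pos_lt; auto).
 apply Rmult_lt_reg_r with (Rabs h); auto. rewrite Rmult_assoc, Rinv_l by lra. rewrite Rmult_1_r.
 eapply Rle_lt_trans. apply N.
 assert (h ^ 2 * G <= Rabs h * Rabs h * Rabs G).
 { replace (h ^ 2) with (Rabs h * Rabs h) by (rewrite <- Rabs_mult; rewrite Rabs_right; [ring| nra]).
   apply Rmult_le_compat_l. nra. apply Rle_abs. }
 assert (Rabs h * (Rabs G + 1) < eps).
 { apply Rmult_lt_reg_r with (/ (Rabs G + 1)). apply Rinv_0_lt_compat; generalize (Rabs_pos G); lra.
   rewrite Rmult_assoc, Rinv_r by (generalize (Rabs_pos G); lra). lra. }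
 generalize (Rabs_pos G); intros. nra.
Qed.


Lemma sym_approx (h : R -> R) l : is_RInt_gen h Fm Fpi l ->
  forall eps : posreal, exists X, forall x, X < x -> Rabs (RInt h (- x) x - l) < eps.
Proof.
 intros H eps. specialize (H (ball l eps) (locally_ball l eps)).
 unfold filtermapi in H. destruct H as [Q R' [M1 HQ] [M2 HR] HP].
 exists (Rmax (Rabs M1) (Rabs M2)). intros x Hx.
 destruct (HP (- x) x) as [y [Hy By]].
 { apply HQ. generalize (Rmax_l (Rabs M1) (Rabs M2)) (Rabs_pos M1) (Rle_abs (- M1)).
   rewrite Rabs_Ropp. intros; lra. }
 { apply HR. generalize (Rmax_r (Rabs M1) (Rabs M2)) (Rle_abs M2). intros; lra. }
 simpl in Hy. rewrite (is_RInt_unique _ _ _ _ Hy). apply By.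
Qed.

Lemma odd_half : forall (h : R -> R) x, (forall t, continuous h t) -> (forall t, h (- t) = - h t) -> RInt h (- x) 0 = RInt h x 0.
intros h x Hc Ho.
apply (is_RInt_unique (V:=R_CompleteNormedModule)).
apply (is_RInt_ext (V:=R_NormedModule)) with (fun y => opp (h (- y))).
intros y _. unfold opp; simpl. rewrite Ho; ring.

apply (is_RInt_comp_opp (V:=R_NormedModule)).  rewrite Ropp_involutive, Ropp_0. 
apply (RInt_correct (V:=R_CompleteNormedModule)).  apply exRc, Hc.
Qed.

Lemma odd_int (h : R -> R) : (forall t, continuous h t) -> (forall t, h (- t) = - h t) ->
  ex_RInt_gen h Fm Fpi -> RInt_gen h Fm Fpi = 0.
Proof.
 intros Hc Ho Hex. pose proof (RInt_gen_correct _ Hex) as I. set (l := RInt_gen h Fm Fpi) in *.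
 assert (Z : forall x, RInt h (- x) x = 0).
 { intros x. rewrite <- (RInt_Chasles h (- x) 0 x) by (apply exRc, Hc).
   rewrite (odd_half h x Hc Ho). rewrite <- (opp_RInt_swap h 0 x) by (apply exRc, Hc).
   unfold plus, opp; simpl. ring. }
 destruct (Req_dec l 0) as [E|E]; auto.
 assert (He : 0 < Rabs l / 2) by (generalize (Rabs_pos_lt _ E); lra).
 destruct (sym_approx h l I (mkposreal _ He)) as [X HX].
 specialize (HX (X + 1) ltac:(lra)). rewrite Z in HX. simpl in HX.
 rewrite Rminus_0_l, Rabs_Ropp in HX. generalize (Rabs_pos l); lra.
Qed.
Lemma pos_int (h : R -> R) l : (forall t, continuous h t) -> (forall t, 0 <= h t) -> 0 < h 0 ->
  is_RInt_gen h Fm Fpi l -> 0 < l.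
Proof.
 intros Hc Hp H0 I.
 assert (Hh2 : 0 < h 0 / 2) by lra.
 destruct (proj1 (filterlim_locally h (h 0)) (Hc 0) (mkposreal _ Hh2)) as [d Hd].
 set (e := d / 2).
 assert (He : 0 < e) by (unfold e; generalize (cond_pos d); lra).
 assert (Low : forall x, e <= x -> e * h 0 <= RInt h (- x) x).
 { intros x Hx.
   rewrite <- (RInt_Chasles h (- x) (- e) x) by (apply exRc, Hc).
   rewrite <- (RInt_Chasles h (- e) e x) by (apply exRc, Hc).
   unfold plus; simpl.
   assert (0 <= RInt h (- x) (- e)) by (apply RInt_ge_0; [lra| apply exRc, Hc| intros; apply Hp]).
   assert (0 <= RInt h e x) by (apply RInt_ge_0; [lra| apply exRc, Hc| intros; apply Hp]).
   assert (H3 : RInt (fun _ => h 0 / 2) (- e) e <= RInt h (- e) e).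
   { apply RInt_le. lra. apply exRc. intros; apply continuous_const. apply exRc, Hc.
     intros y Hy. assert (B : ball 0 d y).
     { change (Rabs (y - 0) < d). unfold e in Hy. unfold Rabs; destruct Rcase_abs; lra. }
     specialize (Hd y B). change (Rabs (h y - h 0) < h 0 / 2) in Hd.
     unfold Rabs in Hd; destruct Rcase_abs in Hd; lra. }
   rewrite (RInt_const (V:=R_CompleteNormedModule)) in H3. unfold scal in H3; simpl in H3. unfold mult in H3; simpl in H3.
   lra. }
 destruct (Rlt_le_dec 0 l) as [P|P]; auto. exfalso.
 assert (Hq : 0 < e * h 0) by (apply Rmult_lt_0_compat; lra).
 destruct (sym_approx h l I (mkposreal _ Hq)) as [X HX].
 set (x := Rmax X e + 1).
 specialize (HX x ltac:(unfold x; generalize (Rmax_l X e); lra)). simpl in HX.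
 specialize (Low x ltac:(unfold x; generalize (Rmax_r X e); lra)).
 unfold Rabs in HX; destruct Rcase_abs in HX; lra.
Qed.

Lemma decay_lim (h : R -> R) C : (forall t, Rabs (h t) <= C * exp (- Rabs t)) ->
  filterlim h Fpi (locally 0) /\ filterlim h Fm (locally 0).
Proof.
 intros Hd. pose proof (C_nonneg h C Hd) as HC.
 split; apply filterlim_locally; intros eps;
 destruct (choose_M C eps HC (cond_pos eps)) as [M [HM HMe]].
 - exists M. intros t Ht. change (Rabs (h t - 0) < eps). rewrite Rminus_0_r.
   eapply Rle_lt_trans. apply Hd.
   assert (exp (- Rabs t) <= exp (- M)).
   { left. apply exp_increasing. rewrite Rabs_right by lra. lra. }
   generalize (exp_pos (- M)); intros. nra.
 - exists (- M). intros t Ht. change (Rabs (h t - 0) < eps). rewrite Rminus_0_r.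
   eapply Rle_lt_trans. apply Hd.
   assert (exp (- Rabs t) <= exp (- M)).
   { left. apply exp_increasing. rewrite Rabs_left by lra. lra. }
   generalize (exp_pos (- M)); intros. nra.
Qed.

Definition D (y : R) : R := 4 * exp y / (1 + exp y ^ 2).
Definition T (y : R) : R := (1 - exp y ^ 2) / (1 + exp y ^ 2).
Definition X (lam s t : R) : R := 4 * atan (exp (lam * t)) - 4 * atan (exp (t - s)).
Definition f0 (lam s t : R) : R := 1 - cos (X lam s t).
Definition f1 (lam s t : R) : R := sin (X lam s t) * D (t - s).
Definition f2 (lam s t : R) : R :=
  cos (X lam s t) * D (t - s) ^ 2 - sin (X lam s t) * D (t - s) * T (t - s).
Definition f3 (lam s t : R) : R :=
  - sin (X lam s t) * D (t - s) ^ 3 - 3 * cos (X lam s t) * D (t - s) ^ 2 * T (t - s)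
  + sin (X lam s t) * D (t - s) * (2 * T (t - s) ^ 2 - 1).

Lemma den_nz y : 1 + exp y ^ 2 <> 0.
Proof. generalize (exp_pos y); intros; nra. Qed.
Lemma den_nz' y : 1 + exp y * (exp y * 1) <> 0.
Proof. generalize (exp_pos y); intros; nra. Qed.

Ltac dsolve := unfold f0, f1, f2, f3, X, D, T, Rminus in *; auto_derive;
  [ repeat split; try apply den_nz; try apply den_nz'; auto
  | try (field_simplify; [ | apply den_nz | apply den_nz' ..]); try field;
    repeat split; try apply den_nz; try apply den_nz' ].

Lemma d_f0 lam s t : is_derive (fun s => f0 lam s t) s (f1 lam s t).
Proof. dsolve. Qed.
Lemma d_f1 lam s t : is_derive (fun s => f1 lam s t) s (f2 lam s t).
Proof. dsolve. Qed.
Lemma d_f2 lam s t : is_derive (fun s => f2 lam s t) s (f3 lam s t).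
Proof. dsolve. Qed.

Lemma exp_mono x y : x <= y -> exp x <= exp y.
Proof. intros H; destruct (Rle_lt_or_eq_dec _ _ H); [left; apply exp_increasing; auto | right; subst; auto]. Qed.

Lemma D_pos y : 0 < D y.
Proof. unfold D. generalize (exp_pos y); intros. apply Rdiv_lt_0_compat; nra. Qed.

Lemma D_le2 y : D y <= 2.
Proof. unfold D. generalize (exp_pos y); intros. apply Rmult_le_reg_r with (1 + exp y ^ 2). nra.
 unfold Rdiv; rewrite Rmult_assoc, Rinv_l by (apply den_nz). generalize (pow2_ge_0 (exp y - 1)); nra. Qed.

Lemma D_dec y : D y <= 4 * exp (- Rabs y).
Proof. unfold D. generalize (exp_pos y); intros.
 apply Rmult_le_reg_r with (1 + exp y ^ 2). nra.
 unfold Rdiv; rewrite Rmult_assoc, Rinv_l by (apply den_nz). rewrite Rmult_1_r.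
 destruct (Rle_dec 0 y).
 - rewrite Rabs_right by lra. rewrite exp_Ropp.
   assert (/ exp y * exp y = 1) by (apply Rinv_l; lra).
   assert (/ exp y > 0) by (apply Rinv_0_lt_compat; lra). nra.
 - rewrite Rabs_left by lra. rewrite Ropp_involutive. nra.
Qed.

Lemma T_bd y : Rabs (T y) <= 1.
Proof. unfold T. generalize (exp_pos y); intros. unfold Rdiv. rewrite Rabs_mult, Rabs_inv.
 rewrite (Rabs_right (1 + exp y ^ 2)) by nra.
 apply Rmult_le_reg_r with (1 + exp y ^ 2). nra.
 rewrite Rmult_assoc, Rinv_l by (apply den_nz). rewrite Rmult_1_r, Rmult_1_l.
 apply Rabs_le. nra. Qed.

Lemma shift_bd t s : exp (- Rabs (t - s)) <= exp (Rabs s) * exp (- Rabs t).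
Proof. rewrite <- exp_plus. apply exp_mono.
 generalize (Rabs_triang (t - s) s). replace (t - s + s) with t by ring. lra. Qed.

Lemma Ds_bd t s : D (t - s) <= 4 * exp (Rabs s) * exp (- Rabs t).
Proof. eapply Rle_trans. apply D_dec. rewrite Rmult_assoc. apply Rmult_le_compat_l. lra. apply shift_bd. Qed.

Lemma D_even y : D (- y) = D y.
Proof. unfold D. rewrite exp_Ropp. generalize (exp_pos y); intros. field_simplify. reflexivity.
 apply den_nz. split. lra. generalize (den_nz y); intros; lra.
Qed.

Lemma m1 a d : Rabs a <= 1 -> 0 <= d -> Rabs (a * d) <= d.
Proof. intros. rewrite Rabs_mult, (Rabs_right d) by lra. generalize (Rabs_pos a); nra. Qed.

Lemma bd1 a d : Rabs a <= 1 -> 0 <= d -> Rabs (a * d) <= d.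
Proof. apply m1. Qed.

Lemma bd2 a b d u : Rabs a <= 1 -> Rabs b <= 1 -> 0 <= d <= 2 -> Rabs u <= 1 ->
  Rabs (b * d ^ 2 - a * d * u) <= 3 * d.
Proof. intros Ha Hb Hd Hu.
 unfold Rminus. eapply Rle_trans. apply Rabs_triang. rewrite Rabs_Ropp.
 assert (Rabs (b * d ^ 2) <= d ^ 2) by (apply m1; nra).
 assert (Rabs (a * d * u) <= d).
 { rewrite Rmult_comm, <- Rmult_assoc. apply m1. rewrite Rabs_mult. generalize (Rabs_pos u) (Rabs_pos a). nra. lra. }
 nra.
Qed.

Lemma bd3 a b d u : Rabs a <= 1 -> Rabs b <= 1 -> 0 <= d <= 2 -> Rabs u <= 1 ->
  Rabs (- a * d ^ 3 - 3 * b * d ^ 2 * u + a * d * (2 * u ^ 2 - 1)) <= 11 * d.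
Proof. intros Ha Hb Hd Hu.
 assert (Rabs (- a * d ^ 3) <= d ^ 3) by (apply m1; [rewrite Rabs_Ropp; auto | nra]).
 assert (Rabs (b * u * (3 * d ^ 2)) <= 3 * d ^ 2).
 { apply m1. rewrite Rabs_mult. generalize (Rabs_pos u) (Rabs_pos b). nra. nra. }
 assert (Rabs ((2 * u ^ 2 - 1) * a * d) <= d).
 { apply m1. rewrite Rabs_mult. assert (Rabs (2 * u ^ 2 - 1) <= 1).
   { apply Rabs_le. assert (u ^ 2 <= 1). { rewrite <- (Rabs_right (u ^ 2)) by nra. rewrite <- RPow_abs.
     generalize (Rabs_pos u); nra. } nra. }
   generalize (Rabs_pos (2 * u ^ 2 - 1)) (Rabs_pos a). nra. lra. }
 replace (- a * d ^ 3 - 3 * b * d ^ 2 * u + a * d * (2 * u ^ 2 - 1))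
   with (- a * d ^ 3 + (- (b * u * (3 * d ^ 2)) + (2 * u ^ 2 - 1) * a * d)) by ring.
 eapply Rle_trans. apply Rabs_triang. eapply Rle_trans. apply Rplus_le_compat_l. apply Rabs_triang.
 rewrite Rabs_Ropp. nra.
Qed.

Lemma f1_bd lam s t : Rabs (f1 lam s t) <= 4 * exp (Rabs s) * exp (- Rabs t).
Proof. unfold f1. eapply Rle_trans. apply m1. apply SIN_bound_abs || (apply Rabs_le; apply SIN_bound).
 left; apply D_pos. apply Ds_bd. Qed.

Lemma f2_bd lam s t : Rabs (f2 lam s t) <= 12 * exp (Rabs s) * exp (- Rabs t).
Proof. unfold f2. eapply Rle_trans. apply bd2.
 apply Rabs_le; apply SIN_bound. apply Rabs_le; apply COS_bound.
 split; [left; apply D_pos| apply D_le2]. apply T_bd.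
 generalize (Ds_bd t s); lra. Qed.

Lemma f3_bd lam s t : Rabs (f3 lam s t) <= 44 * exp (Rabs s) * exp (- Rabs t).
Proof. unfold f3. eapply Rle_trans. apply bd3.
 apply Rabs_le; apply SIN_bound. apply Rabs_le; apply COS_bound.
 split; [left; apply D_pos| apply D_le2]. apply T_bd.
 generalize (Ds_bd t s); lra. Qed.

Lemma lip1 (g dg : R -> R) a b : (forall x, is_derive g x (dg x)) -> (forall x, Rabs (dg x) <= 1) ->
  Rabs (g b - g a) <= Rabs (b - a).
Proof. intros Hd Hb.
 destruct (MVT_gen g a b dg) as [c [_ Hc]]. intros; apply Hd. intros x _; apply deriv_cont with (dg x); apply Hd.
 rewrite Hc, Rabs_mult. generalize (Hb c) (Rabs_pos (b - a)); nra. Qed.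


Lemma atan_abs z : Rabs (atan z) <= Rabs z.
Proof. rewrite <- (Rminus_0_r (atan z)). rewrite <- atan_0 at 1. rewrite <- (Rminus_0_r z) at 2.
 
 apply lip1 with (fun x => / (1 + x²)).  intros; apply is_derive_atan.
 
 intros x. assert (0 < 1 + x²) by (generalize (Rle_0_sqr x); lra).
 rewrite Rabs_right by (left; apply Rinv_0_lt_compat; lra).
 
 rewrite <- Rinv_1. apply Rinv_le_contravar. lra. generalize (Rle_0_sqr x); lra.
Qed.

Lemma one_m_cos x : Rabs (1 - cos x) <= Rabs x.
Proof. rewrite <- cos_0 at 1.  rewrite <- (Rminus_0_r x) at 2.  rewrite <- Rabs_Ropp, Ropp_minus_distr.
 
 apply lip1 with (fun x => - sin x).  intros; auto_derive; auto; ring.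
 
 intros; rewrite Rabs_Ropp; apply Rabs_le; apply SIN_bound. Qed.

Lemma atan_exp_inv y : atan (exp y) = PI / 2 - atan (exp (- y)).
Proof.  Timeout 5 rewrite exp_Ropp.  Timeout 5 rewrite atan_inv by apply exp_pos.  ring. Qed.
Lemma atan_exp_bd y : Rabs (atan (exp y)) <= exp y.
Proof. generalize (atan_abs (exp y)). rewrite (Rabs_right (exp y)) by (left; apply exp_pos). auto. Qed.

Lemma f0_bd lam s t : 1 <= lam -> Rabs (f0 lam s t) <= (4 * exp (Rabs s) + 4) * exp (- Rabs t).
Proof. intros Hl. unfold f0. eapply Rle_trans. apply one_m_cos. unfold X.
 assert (Hs : exp (Rabs s) * exp (- Rabs t) = exp (Rabs s - Rabs t)) by (rewrite <- exp_plus; auto).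
 
 destruct (Rle_dec 0 t).
 - rewrite (atan_exp_inv (lam * t)), (atan_exp_inv (t - s)).
   
   Timeout 5 replace (4 * (PI / 2 - atan (exp (- (lam * t)))) - 4 * (PI / 2 - atan (exp (- (t - s)))))
     with (4 * atan (exp (- (t - s))) + - (4 * atan (exp (- (lam * t))))) by ring.
   
   eapply Rle_trans. apply Rabs_triang. Timeout 5 rewrite Rabs_Ropp, !Rabs_mult, (Rabs_right 4) by lra.
   generalize (atan_exp_bd (- (t - s))) (atan_exp_bd (- (lam * t))). intros A1 A2.
   assert (exp (- (t - s)) <= exp (Rabs s) * exp (- Rabs t)).
   { rewrite Hs. apply exp_mono. rewrite (Rabs_right t) by lra. generalize (Rle_abs s); lra. }
   assert (exp (- (lam * t)) <= exp (- Rabs t)).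
   { apply exp_mono. rewrite Rabs_right by lra. nra. }
   lra.
 - unfold Rminus at 1. eapply Rle_trans. apply Rabs_triang. rewrite Rabs_Ropp, !Rabs_mult, (Rabs_right 4) by lra.
   generalize (atan_exp_bd (t - s)) (atan_exp_bd (lam * t)). intros A1 A2.
   assert (exp (t - s) <= exp (Rabs s) * exp (- Rabs t)).
   { rewrite Hs. apply exp_mono. rewrite (Rabs_left t) by lra. generalize (Rle_abs (- s)); rewrite Rabs_Ropp; lra. }
   assert (exp (lam * t) <= exp (- Rabs t)).
   { apply exp_mono. rewrite Rabs_left by lra. nra. }
   lra.
Qed.

Ltac ctac := intros; apply (ex_derive_continuous (K:=R_AbsRing) (V:=R_NormedModule));
  unfold f0, f1, f2, f3, X, D, T, Rminus in *; auto_derive;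
  repeat split; auto; try apply den_nz; try apply den_nz'.

Lemma c_f0 lam s t : continuous (fun t => f0 lam s t) t. Proof. ctac. Qed.
Lemma c_f1 lam s t : continuous (fun t => f1 lam s t) t. Proof. ctac. Qed.
Lemma c_f2 lam s t : continuous (fun t => f2 lam s t) t. Proof. ctac. Qed.
Lemma c_f3 lam s t : continuous (fun t => f3 lam s t) t. Proof. ctac. Qed.

Lemma cont_g C t : continuous (fun t => C * exp (- Rabs t)) t.
Proof. apply (continuous_mult (fun _ => C) (fun t => exp (- Rabs t))). apply continuous_const.
 apply (continuous_comp (fun t => - Rabs t) exp). apply (continuous_opp (fun t => Rabs t)). apply continuous_Rabs.
 apply (ex_derive_continuous (K:=R_AbsRing) (V:=R_NormedModule)). auto_derive; auto. Qed.

Definition Q (lam t : R) := sin (X lam 0 t) * D (t - 0).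
Definition Qd (lam t : R) := cos (X lam 0 t) * (lam * D (lam * t) - D (t - 0)) * D (t - 0)
  + sin (X lam 0 t) * (D (t - 0) * T (t - 0)).
Definition P (lam t : R) := lam * cos (X lam 0 t) * D (lam * t) * D (t - 0).

Lemma d_Q lam t : is_derive (Q lam) t (Qd lam t).
Proof. unfold Q, Qd, X, D, T, Rminus; auto_derive;
  [ repeat split; try apply den_nz; try apply den_nz'; auto
  | try (field_simplify; [ | apply den_nz | apply den_nz' ..]); try field;
    repeat split; try apply den_nz; try apply den_nz' ]. Qed.

Lemma c_Qd lam t : continuous (Qd lam) t.
Proof. apply (ex_derive_continuous (K:=R_AbsRing) (V:=R_NormedModule)).
 unfold Qd, X, D, T, Rminus; auto_derive; repeat split; auto; try apply den_nz; try apply den_nz'. Qed.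

Lemma c_P lam t : continuous (P lam) t.
Proof. apply (ex_derive_continuous (K:=R_AbsRing) (V:=R_NormedModule)).
 unfold P, X, D, T, Rminus; auto_derive; repeat split; auto; try apply den_nz; try apply den_nz'. Qed.

Lemma f2_PQ lam t : f2 lam 0 t = P lam t - Qd lam t.
Proof. unfold f2, P, Qd. ring. Qed.

Lemma phi_odd l t : phi l (- t) = - phi l t.
Proof. unfold phi. rewrite (atan_exp_inv (l * t)), (atan_exp_inv t).
 replace (l * - t) with (- (l * t)) by ring. ring. Qed.

Lemma X0_phi lam t : X lam 0 t = phi lam t.
Proof. unfold X, phi. rewrite Rminus_0_r. auto. Qed.

Lemma phi_bd l0 lam : is_lambda0 l0 -> 1 <= lam <= l0 -> forall t, - (PI / 2) <= phi lam t <= PI / 2.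
Proof.
 intros [H1 [_ H3]] Hl.
 assert (Pos : forall t, 0 < t -> 0 <= phi lam t <= PI / 2).
 { intros t Ht. unfold phi in *. specialize (H3 t Ht).
   assert (atan (exp t) <= atan (exp (lam * t))).
   { destruct (Rle_lt_or_eq_dec t (lam * t)) as [E|E]. nra.
     left; apply atan_increasing, exp_increasing; auto. right; rewrite <- E; auto. }
   assert (atan (exp (lam * t)) <= atan (exp (l0 * t))).
   { destruct (Rle_lt_or_eq_dec (lam * t) (l0 * t)) as [E|E]. nra.
     left; apply atan_increasing, exp_increasing; auto. right; rewrite E; auto. }
   lra. }
 intros t. destruct (Rtotal_order t 0) as [N|[Z|Pp]].
 - specialize (Pos (- t) ltac:(lra)). rewrite phi_odd in Pos. lra.
 - subst. unfold phi. rewrite Rmult_0_r, exp_0. generalize PI_RGT_0; lra.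
 - specialize (Pos t Pp). generalize PI_RGT_0; lra.
Qed.

Lemma exg C : 0 <= C -> ex_RInt_gen (fun t => C * exp (- Rabs t)) Fm Fpi.
Proof. intros HC. apply ex_int with C. apply cont_g.
 intros t. rewrite Rabs_right. lra. generalize (exp_pos (- Rabs t)); nra. Qed.

Lemma exp_abs_le1 s : Rabs s < 1 -> exp (Rabs s) <= exp 1.
Proof. intros; apply exp_mono; lra. Qed.

Lemma P_bd lam t : 1 <= lam -> Rabs (P lam t) <= 8 * lam * exp (- Rabs t).
Proof. intros Hl. unfold P. rewrite !Rabs_mult.
 rewrite (Rabs_right lam) by lra. rewrite (Rabs_right (D (lam * t))) by (left; apply D_pos).
 rewrite (Rabs_right (D (t - 0))) by (left; apply D_pos).
 generalize (Ds_bd t 0) (D_le2 (lam * t)) (D_pos (lam * t)) (D_pos (t - 0)) (Rabs_pos (cos (X lam 0 t))).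
 rewrite Rabs_R0, exp_0. intros. assert (Rabs (cos (X lam 0 t)) <= 1) by (apply Rabs_le; apply COS_bound).
 generalize (exp_pos (- Rabs t)); intros.
 assert (lam * Rabs (cos (X lam 0 t)) <= lam) by nra.
 assert (lam * Rabs (cos (X lam 0 t)) * D (lam * t) <= 2 * lam) by nra.
 assert (0 <= lam * Rabs (cos (X lam 0 t)) * D (lam * t)) by (apply Rmult_le_pos; nra).
 nra. Qed.

Theorem proposition10 (l0 : R) (Hl0 : is_lambda0 l0) (lam : R) :
  1 <= lam <= l0 -> nondegenerate_critical_point (Ltilde lam) 0.
Proof.
 intros Hlam. assert (Hl1 : 1 <= lam) by lra.
 assert (exf0 : forall s, ex_RInt_gen (f0 lam s) Fm Fpi).
 { intros s. apply ex_int with (4 * exp (Rabs s) + 4). apply c_f0. intros; apply f0_bd; auto. }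
 assert (exf1 : forall s, ex_RInt_gen (f1 lam s) Fm Fpi).
 { intros s. apply ex_int with (4 * exp (Rabs s)). apply c_f1. intros; apply f1_bd. }
 assert (exf2 : forall s, ex_RInt_gen (f2 lam s) Fm Fpi).
 { intros s. apply ex_int with (12 * exp (Rabs s)). apply c_f2. intros; apply f2_bd. }
 assert (E1 : 0 < exp 1) by apply exp_pos.
 assert (Der1 : forall x, Rabs (x - 0) < 1 / 2 ->
   is_derive (fun s => RInt_gen (f0 lam s) Fm Fpi) x (RInt_gen (f1 lam x) Fm Fpi)).
 { intros x Hx. rewrite Rminus_0_r in Hx.
   apply param_deriv with (f2 := f2 lam) (g := fun t => 12 * exp 1 * exp (- Rabs t)) (r := 1 / 2).
   lra. apply d_f0. apply d_f1.
   intros s t Hs. eapply Rle_trans. apply f2_bd.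
   assert (exp (Rabs s) <= exp 1).
   { apply exp_abs_le1. generalize (Rabs_triang (s - x) x). replace (s - x + x) with s by ring. lra. }
   generalize (exp_pos (- Rabs t)); nra.
   intros; apply exf0. apply exf1. apply exg; lra. }
 assert (Der2 : is_derive (fun s => RInt_gen (f1 lam s) Fm Fpi) 0 (RInt_gen (f2 lam 0) Fm Fpi)).
 { apply param_deriv with (f2 := f3 lam) (g := fun t => 44 * exp 1 * exp (- Rabs t)) (r := 1).
   lra. apply d_f1. apply d_f2.
   intros s t Hs. rewrite Rminus_0_r in Hs. eapply Rle_trans. apply f3_bd.
   assert (exp (Rabs s) <= exp 1) by (apply exp_abs_le1; auto).
   generalize (exp_pos (- Rabs t)); nra.
   intros; apply exf1. apply exf2. apply exg; lra. }
 exists (fun s => - RInt_gen (f1 lam s) Fm Fpi), (1 / 2). split. lra. split.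
 { intros x Hx. unfold Ltilde.
   apply (is_derive_opp (fun s => RInt_gen (f0 lam s) Fm Fpi) x _ (Der1 x Hx)). }
 split.
 { assert (Ho : forall t, f1 lam 0 (- t) = - f1 lam 0 t).
   { intros t. unfold f1. rewrite !X0_phi, phi_odd, sin_neg, !Rminus_0_r, D_even. ring. }
   rewrite (odd_int (f1 lam 0) (c_f1 lam 0) Ho (exf1 0)). ring. }
 exists (- RInt_gen (f2 lam 0) Fm Fpi). split.
 { apply (is_derive_opp (fun s => RInt_gen (f1 lam s) Fm Fpi) 0 _ Der2). }
 assert (exP : ex_RInt_gen (P lam) Fm Fpi).
 { apply ex_int with (8 * lam). apply c_P. intros; apply P_bd; auto. }
 pose proof (RInt_gen_correct _ exP) as IP.
 assert (QD : is_RInt_gen (Derive (Q lam)) Fm Fpi (0 - 0)).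
 { apply is_RInt_gen_Derive.
   - apply filter_forall. intros ab y _. exists (Qd lam y). apply d_Q.
   - apply filter_forall. intros ab y _.
     apply continuous_ext with (Qd lam). intros z. symmetry. apply is_derive_unique, d_Q. apply c_Qd.
   - apply (decay_lim (Q lam) 4). intros t. generalize (f1_bd lam 0 t). rewrite Rabs_R0, exp_0. unfold Q, f1. lra.
   - apply (decay_lim (Q lam) 4). intros t. generalize (f1_bd lam 0 t). rewrite Rabs_R0, exp_0. unfold Q, f1. lra. }
 pose proof (is_RInt_gen_minus _ _ _ _ IP QD) as K.
 assert (K2 : is_RInt_gen (f2 lam 0) Fm Fpi (minus (RInt_gen (P lam) Fm Fpi) (0 - 0))).
 { eapply is_RInt_gen_ext; [ | apply K].
   apply filter_forall. intros ab y _. rewrite (is_derive_unique _ _ _ (d_Q lam y)).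
   rewrite f2_PQ. unfold minus, plus, opp; simpl. ring. }
 rewrite (is_RInt_gen_unique _ _ K2).
 assert (Hpos : 0 < RInt_gen (P lam) Fm Fpi).
 { apply pos_int with (P lam); auto. apply c_P.
   - intros t. unfold P. rewrite X0_phi.
     generalize (cos_ge_0 _ (proj1 (phi_bd l0 lam Hl0 Hlam t)) (proj2 (phi_bd l0 lam Hl0 Hlam t))).
     generalize (D_pos (lam * t)) (D_pos (t - 0)). intros.
     apply Rmult_le_pos; [apply Rmult_le_pos; [apply Rmult_le_pos|] |]; lra.
   - unfold P. rewrite X0_phi.
     assert (phi lam 0 = 0) by (unfold phi; rewrite Rmult_0_r, exp_0; ring).
     rewrite H, cos_0. generalize (D_pos (lam * 0)) (D_pos (0 - 0)). intros.
     apply Rmult_lt_0_compat; [apply Rmult_lt_0_compat; [apply Rmult_lt_0_compat|] |]; lra. }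
 unfold minus, plus, opp; simpl. lra.
Qed.
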